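(* On the point-like global monopole spacetime $(M,g)$, the Ricci tensor $S$ satisfies: (a) $(M,g)$ is not Einstein, i.e. there is no function $f$ with $S=f\,g$, and it is not quasi-Einstein, i.e. there is no function $a$ for which $S-a\,g$ has rank $1$ at every point; (b) $(M,g)$ is an Einstein manifold of degree $2$: $S^2=\frac{\alpha^2-1}{r^2}\,S$; (c) $(M,g)$ is $2$-quasi-Einstein: there is a function $a$ (namely $a=0$) such that $S-a\,g$ has rank $2$ at every point; (d) the Riemann curvature tensor decomposes as $R=\frac{r^2}{2(\alpha^2-1)}\,S\wedge S$.
   Context: Let $M=\{(t,r,\theta,\phi):t\in\mathbb R,\ r>0,\ 0<\theta<\pi,\ 0<\phi<2\pi\}$ with coordinates $x^1=t,x^2=r,x^3=\theta,x^4=\phi$, equipped with the Lorentzian metric (point-like global monopole metric) $g=-dt^2+\alpha^{-2}dr^2+r^2(d\theta^2+\sin^2\theta\,d\phi^2)$, where $\alpha$ is a constant with $0<\alpha<1$. Let $\Gamma^l_{ij}$ be the Christoffel symbols of the Levi-Civita connection $\nabla$. Curvature conventions: $R^l{}_{ijk}=\partial_j\Gamma^l_{ik}-\partial_k\Gamma^l_{ij}+\Gamma^l_{mj}\Gamma^m_{ik}-\Gamma^l_{mk}\Gamma^m_{ij}$ (components of the $(1,3)$ curvature tensor $\widetilde R$), $R_{hijk}=g_{hl}R^l{}_{ijk}$ (components of the $(0,4)$ Riemann tensor $R$), Ricci tensor $S_{ij}=g^{hk}R_{hijk}$, scalar curvature $\kappa=g^{ij}S_{ij}$. The tensor $S^2$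 is $S^2_{ij}=S_{ik}g^{kl}S_{lj}$. For symmetric $(0,2)$-tensors $A,B$ the Kulkarni–Nomizu product is $(A\wedge B)_{hijk}=A_{hk}B_{ij}+A_{ij}B_{hk}-A_{hj}B_{ik}-A_{ik}B_{hj}$. *)

(* Defs.v *)
From Stdlib Require Import Reals.
From Coquelicot Require Import Coquelicot.
From mathcomp Require Import all_boot all_algebra.
From mathcomp Require Import Rstruct.

Set Implicit Arguments.
Unset Strict Implicit.
Unset Printing Implicit Defensive.

Import GRing.Theory.
Local Open Scope ring_scope.

(* A point of the coordinate chart: x^1 = t, x^2 = r, x^3 = theta, x^4 = phi,
   indexed here by 0,1,2,3 : 'I_4. *)
Definition pt := 'I_4 -> R.

Definition it : 'I_4 := @Ordinal 4 0 isT.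
Definition ir : 'I_4 := @Ordinal 4 1 isT.
Definition ith : 'I_4 := @Ordinal 4 2 isT.
Definition iph : 'I_4 := @Ordinal 4 3 isT.

Definition inM (p : pt) : Prop :=
  (0 < p ir)%R /\ (0 < p ith < PI)%R /\ (0 < p iph < 2 * PI)%R.

Definition gmet (alpha : R) (p : pt) (i j : 'I_4) : R :=
  if i == j then
    match val i with
    | 0 => -1
    | 1 => 1 / (alpha ^+ 2)
    | 2 => p ir ^+ 2
    | _ => p ir ^+ 2 * sin (p ith) ^+ 2
    end
  else 0.

Definition gmat (alpha : R) (p : pt) : 'M[R]_4 := \matrix_(i, j) gmet alpha p i j.

Definition ginv (alpha : R) (p : pt) (i j : 'I_4) : R := invmx (gmat alpha p) i j.

Definition pd (F : pt -> R) (j : 'I_4) (p : pt) : R :=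
  Derive (fun s => F (fun k => if k == j then s else p k)) (p j).

Definition Gam (alpha : R) (p : pt) (l i k : 'I_4) : R :=
  2^-1 * \sum_(m < 4) ginv alpha p l m *
    (pd (fun q => gmet alpha q m k) i p + pd (fun q => gmet alpha q m i) k p
     - pd (fun q => gmet alpha q i k) m p).

Definition Riem13 (alpha : R) (p : pt) (l i j k : 'I_4) : R :=
  pd (fun q => Gam alpha q l i k) j p - pd (fun q => Gam alpha q l i j) k p
  + \sum_(m < 4) Gam alpha p l m j * Gam alpha p m i k
  - \sum_(m < 4) Gam alpha p l m k * Gam alpha p m i j.

Definition Riem (alpha : R) (p : pt) (h i j k : 'I_4) : R :=
  \sum_(l < 4) gmet alpha p h l * Riem13 alpha p l i j k.

Definition Ric (alpha : R) (p : pt) (i j : 'I_4) : R :=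
  \sum_(h < 4) \sum_(k < 4) ginv alpha p h k * Riem alpha p h i j k.

Definition Ricmat (alpha : R) (p : pt) : 'M[R]_4 := \matrix_(i, j) Ric alpha p i j.

Definition Ric2 (alpha : R) (p : pt) (i j : 'I_4) : R :=
  \sum_(k < 4) \sum_(l < 4) Ric alpha p i k * ginv alpha p k l * Ric alpha p l j.

Definition KN (A B : 'I_4 -> 'I_4 -> R) (h i j k : 'I_4) : R :=
  A h k * B i j + A i j * B h k - A h j * B i k - A i k * B h j.

(* Main.v *)
Require Import Defs.
From Stdlib Require Import Reals Lra.
From Coquelicot Require Import Coquelicot.
From mathcomp Require Import all_boot all_algebra.
From mathcomp Require Import Rstruct.
From mathcomp Require Import ring lra.
From mathcomp Require Import order.
Import GRing.Theory Num.Theory Order.TTheory.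
Local Open Scope ring_scope.


Definition inU (p : pt) : Prop := 0 < p ir /\ 0 < p ith < PI.

Lemma loc_int (a b x : R) : Rlt a x -> Rlt x b -> locally x (fun y => Rlt a y /\ Rlt y b).
Proof.
move=> h1 h2.
have he : Rlt 0 (Rmin (x - a) (b - x)) by apply: Rmin_glb_lt; Lra.lra.
exists (mkposreal _ he) => y /=.
rewrite /ball /= /AbsRing_ball /abs /minus /=.
move=> Hy; split; rewrite /Hierarchy.plus /Hierarchy.opp /= in Hy.
have := Rmin_l (x - a) (b - x); have := Rmin_r (x - a) (b - x).
move: Hy; rewrite /Rabs; case: Rcase_abs => ? ? ? ?; Lra.lra.
have := Rmin_l (x - a) (b - x); have := Rmin_r (x - a) (b - x).
move: Hy; rewrite /Rabs; case: Rcase_abs => ? ? ? ?; Lra.lra.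
Qed.

Lemma ord4_cases (j : 'I_4) : j = it \/ j = ir \/ j = ith \/ j = iph.
Proof.
case: j => [[|[|[|[|j]]]] Hj] //.
- by left; apply: val_inj.
- by right; left; apply: val_inj.
- by right; right; left; apply: val_inj.
- by right; right; right; apply: val_inj.
Qed.

Lemma pd_2var (H : R -> R -> R) (p : pt) (j : 'I_4) dR dT :
  is_derive (fun s => H s (p ith)) (p ir) dR ->
  is_derive (fun s => H (p ir) s) (p ith) dT ->
  pd (fun q => H (q ir) (q ith)) j p =
  if (val j == 1)%N then dR else if (val j == 2)%N then dT else 0.
Proof.
move=> hR hT; rewrite /pd.
case: (ord4_cases j) => [->|[->|[->|->]]] /=.
- by rewrite Derive_const.
- by apply: is_derive_unique.
- by apply: is_derive_unique.
- by rewrite Derive_const.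
Qed.

Lemma R1E : R1 = 1. Proof. by []. Qed.
Lemma R0E : R0 = 0. Proof. by []. Qed.
Lemma IZR1E : IZR 1 = 1. Proof. by []. Qed.
Lemma IZR2E : IZR 2 = 2. Proof. by rewrite -R1E /IZR /IPR /IPR_2 RplusE R1E. Qed.

Lemma IZR0E : IZR 0 = 0. Proof. by []. Qed.
Lemma IZRN1E : IZR (Zneg 1) = -1. Proof. by rewrite /IZR /IPR RoppE R1E. Qed.

Ltac unfold_ops := rewrite /GRing.exp /= /GRing.mul /GRing.add /GRing.inv /GRing.opp /=.
Ltac refold := rewrite ?RmultE ?RplusE ?RoppE ?RinvE ?RminusE ?RdivE ?R1E ?R0E ?IZR1E ?IZR2E ?IZRN1E ?IZR0E.

Section Tables.
Variable a : R.

Definition gN (r th : R) (m : nat) : R :=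
  match m with
  | 0 => -1
  | 1 => 1 / (a ^+ 2)
  | 2 => r ^+ 2
  | _ => r ^+ 2 * sin th ^+ 2
  end.

Definition dgN (r th : R) (m j : nat) : R :=
  match j with
  | 1 => match m with 0 | 1 => 0 | 2 => 2 * r | _ => 2 * r * sin th ^+ 2 end
  | 2 => match m with 0 | 1 | 2 => 0 | _ => r ^+ 2 * (2 * sin th * cos th) end
  | _ => 0
  end.

Definition giN (r th : R) (m : nat) : R :=
  match m with
  | 0 => -1
  | 1 => a ^+ 2
  | 2 => (r ^+ 2)^-1
  | _ => (r ^+ 2 * sin th ^+ 2)^-1
  end.

Lemma dgN_r (r th : R) m : is_derive (fun s => gN s th m) r (dgN r th m 1).
Proof.
case: m => [|[|[|m]]] /=; unfold_ops; try apply: is_derive_const;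
 auto_derive => //; refold; ring.
Qed.

Lemma dgN_t (r th : R) m : is_derive (fun s => gN r s m) th (dgN r th m 2).
Proof.
case: m => [|[|[|m]]] /=; unfold_ops; try apply: is_derive_const;
 auto_derive => //; refold; ring.
Qed.

End Tables.

Lemma pd_ext (F G : pt -> R) j p : (forall q, F q = G q) -> pd F j p = pd G j p.
Proof. by move=> h; rewrite /pd; apply: Derive_ext => s; apply: h. Qed.

Lemma gmetE a q m k :
  gmet a q m k = if (val m == val k)%N then gN a (q ir) (q ith) (val m) else 0.
Proof. by []. Qed.

Lemma pd_gmet a p m k j :
  pd (fun q => gmet a q m k) j p =
  if (val m == val k)%N then dgN (p ir) (p ith) (val m) (val j) else 0.
Proof.
rewrite (pd_ext _ _ _ _ (fun q => gmetE a q m k)).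
case: (val m == val k)%N.
- rewrite (pd_2var (fun r th => gN a r th (val m)) p j _ _ (dgN_r a _ _ _) (dgN_t a _ _ _)).
  by case: (ord4_cases j) => [->|[->|[->|->]]].
- by rewrite /pd Derive_const.
Qed.

Lemma sum4 (F : 'I_4 -> R) : \sum_(k < 4) F k = F it + F ir + F ith + F iph.
Proof.
rewrite !big_ord_recl big_ord0 addr0 !addrA.
by congr (_ + _ + _ + _); congr F; apply: val_inj.
Qed.

Definition Gi a (p : pt) : 'M[R]_4 :=
  \matrix_(i, j) if (val i == val j)%N then giN a (p ir) (p ith) (val i) else 0.

Lemma gmat_Gi a p : a != 0 -> p ir != 0 -> sin (p ith) != 0 ->
  gmat a p *m Gi a p = 1%:M.
Proof.
move=> ha hr hs; apply/matrixP => i j; rewrite !mxE sum4 !mxE.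
case: (ord4_cases i) => [->|[->|[->|->]]]; case: (ord4_cases j) => [->|[->|[->|->]]];
  rewrite /gmet /= ?mxE /= ?IZRN1E; by field; rewrite ?ha ?hr ?hs.
Qed.

Lemma ginvE (a : R) (p : pt) (i j : 'I_4) : a != 0 -> p ir != 0 -> sin (p ith) != 0 ->
  ginv a p i j = if (val i == val j)%N then giN a (p ir) (p ith) (val i) else 0.
Proof.
move=> ha hr hs.
have [hu _] := mulmx1_unit (gmat_Gi a p ha hr hs).
rewrite /ginv; have -> : invmx (gmat a p) = Gi a p.
  by rewrite -[RHS]mul1mx -(mulVmx hu) -mulmxA gmat_Gi // mulmx1.
by rewrite mxE.
Qed.

Section Tables2.
Variable a : R.

Definition Gt (r th : R) (l i k : nat) : R :=
  match l, i, k with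
  | 1, 2, 2 => - (a ^+ 2) * r
  | 1, 3, 3 => - (a ^+ 2) * r * sin th ^+ 2
  | 2, 1, 2 => r^-1
  | 2, 2, 1 => r^-1
  | 2, 3, 3 => - (sin th * cos th)
  | 3, 1, 3 => r^-1
  | 3, 3, 1 => r^-1
  | 3, 2, 3 => cos th / sin th
  | 3, 3, 2 => cos th / sin th
  | _, _, _ => 0
  end.

Definition GtR (r th : R) (l i k : nat) : R :=
  match l, i, k with
  | 1, 2, 2 => - (a ^+ 2)
  | 1, 3, 3 => - (a ^+ 2) * sin th ^+ 2
  | 2, 1, 2 => - (r * r)^-1
  | 2, 2, 1 => - (r * r)^-1
  | 3, 1, 3 => - (r * r)^-1
  | 3, 3, 1 => - (r * r)^-1
  | _, _, _ => 0
  end.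

Definition GtT (r th : R) (l i k : nat) : R :=
  match l, i, k with
  | 1, 3, 3 => - (a ^+ 2) * r * (2 * sin th * cos th)
  | 2, 3, 3 => - (cos th * cos th - sin th * sin th)
  | 3, 2, 3 => (- (sin th * sin th) - cos th * cos th) / (sin th * sin th)
  | 3, 3, 2 => (- (sin th * sin th) - cos th * cos th) / (sin th * sin th)
  | _, _, _ => 0
  end.

Lemma GtR_d (r th : R) l i k : r != 0 -> is_derive (fun s => Gt s th l i k) r (GtR r th l i k).
Proof.
move=> /eqP hr.
case: l => [|[|[|[|l]]]] /=; try apply: is_derive_const;
case: i => [|[|[|[|i]]]] /=; try apply: is_derive_const;
case: k => [|[|[|[|k]]]] /=; try apply: is_derive_const;
unfold_ops; auto_derive; rewrite ?R0E; try tauto; refold; field; by apply/eqP.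
Qed.

Lemma GtT_d (r th : R) l i k : sin th != 0 -> is_derive (fun s => Gt r s l i k) th (GtT r th l i k).
Proof.
move=> /eqP hs.
case: l => [|[|[|[|l]]]] /=; try apply: is_derive_const;
case: i => [|[|[|[|i]]]] /=; try apply: is_derive_const;
case: k => [|[|[|[|k]]]] /=; try apply: is_derive_const;
unfold_ops; auto_derive; rewrite ?R0E; try tauto; refold; field; by apply/eqP.
Qed.
End Tables2.

Lemma GamE (a : R) (p : pt) (l i k : 'I_4) : a != 0 -> p ir != 0 -> sin (p ith) != 0 ->
  Gam a p l i k = Gt a (p ir) (p ith) (val l) (val i) (val k).
Proof.
move=> ha hr hs; rewrite /Gam.
under eq_bigr => m _ do rewrite ginvE // !pd_gmet.
rewrite sum4.
case: (ord4_cases l) => [->|[->|[->|->]]];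
case: (ord4_cases i) => [->|[->|[->|->]]];
case: (ord4_cases k) => [->|[->|[->|->]]] => /=;
refold; by field; rewrite ?ha ?hr ?hs.
Qed.

Lemma Rlt0_neq0 (x : R) : Rlt 0 x -> x != 0.
Proof. by move/RltP/lt0r_neq0. Qed.

Lemma sin_neq0 (x : R) : Rlt 0 x -> Rlt x PI -> sin x != 0.
Proof. by move=> h1 h2; apply: Rlt0_neq0; apply: sin_gt_0. Qed.

Lemma inU_facts (p : pt) : inU p -> Rlt 0 (p ir) /\ Rlt 0 (p ith) /\ Rlt (p ith) PI.
Proof. by case=> /RltP h1 /andP[/RltP h2 /RltP h3]. Qed.

Lemma pd_Gam (a : R) (p : pt) (l i k j : 'I_4) : 0 < a -> inU p ->
  pd (fun q => Gam a q l i k) j p =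
  if (val j == 1)%N then GtR a (p ir) (p ith) (val l) (val i) (val k)
  else if (val j == 2)%N then GtT a (p ir) (p ith) (val l) (val i) (val k) else 0.
Proof.
move=> ha0 hU; have ha := lt0r_neq0 ha0.
have [h1 [h2 h3]] := inU_facts p hU.
have hr := Rlt0_neq0 _ h1; have hs := sin_neq0 _ h2 h3.
rewrite -(pd_2var (fun r th => Gt a r th (val l) (val i) (val k)) p j _ _
   (GtR_d a _ _ _ _ _ hr) (GtT_d a _ _ _ _ _ hs)).
rewrite /pd; apply: Derive_ext_loc.
case: (ord4_cases j) => [->|[->|[->|->]]] /=.
- by apply: filter_forall => s; rewrite GamE.
- apply: filter_imp (loc_int 0 (p ir + 1) (p ir) h1 _); last by Lra.lra.
  by move=> s [hs1 _]; rewrite GamE //= Rlt0_neq0.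
- apply: filter_imp (loc_int 0 PI (p ith) h2 h3).
  by move=> s [hs1 hs2]; rewrite GamE //= sin_neq0.
- by apply: filter_forall => s; rewrite GamE.
Qed.

Definition dG (a r th : R) (j l i k : nat) : R :=
  if (j == 1)%N then GtR a r th l i k else if (j == 2)%N then GtT a r th l i k else 0.

Definition R13 (a r th : R) (l i j k : nat) : R :=
  dG a r th j l i k - dG a r th k l i j
  + (Gt a r th l 0 j * Gt a r th 0 i k + Gt a r th l 1 j * Gt a r th 1 i k
     + Gt a r th l 2 j * Gt a r th 2 i k + Gt a r th l 3 j * Gt a r th 3 i k)
  - (Gt a r th l 0 k * Gt a r th 0 i j + Gt a r th l 1 k * Gt a r th 1 i j
     + Gt a r th l 2 k * Gt a r th 2 i j + Gt a r th l 3 k * Gt a r th 3 i j).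

Lemma Riem13E (a : R) (p : pt) (l i j k : 'I_4) : 0 < a -> inU p ->
  Riem13 a p l i j k = R13 a (p ir) (p ith) (val l) (val i) (val j) (val k).
Proof.
move=> ha0 hU; have ha := lt0r_neq0 ha0.
have [h1 [h2 h3]] := inU_facts p hU.
have hr := Rlt0_neq0 _ h1; have hs := sin_neq0 _ h2 h3.
rewrite /Riem13 !pd_Gam // !sum4 !GamE //=.
Qed.

Lemma RiemE0 (a : R) (p : pt) (h i j k : 'I_4) : 0 < a -> inU p ->
  Riem a p h i j k = gN a (p ir) (p ith) (val h) * R13 a (p ir) (p ith) (val h) (val i) (val j) (val k).
Proof.
move=> ha0 hU.
rewrite /Riem sum4 !Riem13E //.
case: (ord4_cases h) => [->|[->|[->|->]]] /=; rewrite /gmet /=; refold; ring.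
Qed.

Definition ScN (a r th : R) (i j : nat) : R :=
  if (i == j)%N then
    match i with 0 | 1 => 0 | 2 => a ^+ 2 - 1 | _ => (a ^+ 2 - 1) * sin th ^+ 2 end
  else 0.

Definition RcN (a r th : R) (h i j k : nat) : R :=
  r ^+ 2 / (2 * (a ^+ 2 - 1)) *
  (ScN a r th h k * ScN a r th i j + ScN a r th i j * ScN a r th h k
   - ScN a r th h j * ScN a r th i k - ScN a r th i k * ScN a r th h j).

Lemma key (a r th : R) (h i j k : nat) :
  a != 0 -> r != 0 -> sin th != 0 -> a ^+ 2 - 1 != 0 ->
  (h < 4)%N -> (i < 4)%N -> (j < 4)%N -> (k < 4)%N ->
  gN a r th h * R13 a r th h i j k = RcN a r th h i j k.
Proof.
move=> ha0 hr hs ha.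
case: h => [|[|[|[|h]]]] // _;
case: i => [|[|[|[|i]]]] // _;
case: j => [|[|[|[|j]]]] // _;
case: k => [|[|[|[|k]]]] // _;
rewrite /R13 /RcN /dG /ScN /=; refold; by field; rewrite ?ha ?hr ?hs ?ha0.
Qed.



Lemma a2_neq1 (a : R) : 0 < a -> a < 1 -> a ^+ 2 - 1 != 0.
Proof.
move=> h0 h1; rewrite subr_eq0 lt_eqF //.
by rewrite expr2; nra.
Qed.

Section Main.
Variables (a : R) (p : pt).
Hypotheses (ha0 : 0 < a) (ha1 : a < 1) (hU : inU p).

Let ha : a != 0 := lt0r_neq0 ha0.
Let hr : p ir != 0 := Rlt0_neq0 _ (proj1 (inU_facts p hU)).
Let hs : sin (p ith) != 0 :=
  sin_neq0 _ (proj1 (proj2 (inU_facts p hU))) (proj2 (proj2 (inU_facts p hU))).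
Let ha2 : a ^+ 2 - 1 != 0 := a2_neq1 a ha0 ha1.

Lemma RiemE (h i j k : 'I_4) :
  Riem a p h i j k = RcN a (p ir) (p ith) (val h) (val i) (val j) (val k).
Proof. by rewrite RiemE0 // key ?ha ?hr ?hs ?ha2 ?ltn_ord. Qed.

Lemma RicE (i j : 'I_4) : Ric a p i j = ScN a (p ir) (p ith) (val i) (val j).
Proof.
rewrite /Ric.
under eq_bigr => h _ do under eq_bigr => k _ do rewrite ginvE // RiemE.
rewrite !sum4.
case: (ord4_cases i) => [->|[->|[->|->]]];
case: (ord4_cases j) => [->|[->|[->|->]]];
rewrite /RcN /ScN /=; refold; by field; rewrite ?ha ?hr ?hs ?ha2.
Qed.

Lemma Ric2E (i j : 'I_4) :
  Ric2 a p i j = (a ^+ 2 - 1) / (p ir ^+ 2) * Ric a p i j.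
Proof.
rewrite /Ric2.
under eq_bigr => h _ do under eq_bigr => k _ do rewrite ginvE // !RicE.
rewrite !sum4 RicE.
case: (ord4_cases i) => [->|[->|[->|->]]];
case: (ord4_cases j) => [->|[->|[->|->]]];
rewrite /ScN /=; refold; by field; rewrite ?ha ?hr ?hs ?ha2.
Qed.

End Main.

Lemma colsubE' m n n' (g : 'I_n' -> 'I_n) (A : 'M[R]_(m, n)) :
  colsub g A = A *m colsub g 1%:M.
Proof. by rewrite mulmx_colsub mulmx1. Qed.

Lemma rank_ge2 (A : 'M[R]_4) (u v : 'I_4) : u != v ->
  A u v = 0 -> A v u = 0 -> A u u != 0 -> A v v != 0 -> (2 <= \rank A)%N.
Proof.
move=> huv h1 h2 h3 h4.
pose f : 'I_2 -> 'I_4 := fun i => if i == ord0 then u else v.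
pose B := mxsub f f A.
have hB : B \in unitmx.
  pose C : 'M[R]_2 := \matrix_(i, j) if i == j then (A (f i) (f i))^-1 else 0.
  have [] // := @mulmx1_unit _ _ B C.
  apply/matrixP => i j; rewrite !mxE !big_ord_recl big_ord0 !mxE.
  case: i => [[|[|i]] Hi] //; case: j => [[|[|j]] Hj] //; rewrite /f /= ?h1 ?h2;
  rewrite ?mulr0 ?mul0r ?addr0 ?add0r ?mulfV //.
have h2B : \rank B = 2%N by apply: mxrank_unit.
apply: (@leq_trans (\rank B)); first by rewrite h2B.
rewrite /B (_ : mxsub f f A = rowsub f (colsub f A)); last by apply/matrixP => i j; rewrite !mxE.
rewrite rowsubE; apply: leq_trans (mxrankM_maxr _ _) _.
by rewrite colsubE'; apply: mxrankM_maxl.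
Qed.

Lemma rank_le2 (A : 'M[R]_4) (u v : 'I_4) : u != v ->
  (forall i j, i != u -> i != v -> A i j = 0) -> (\rank A <= 2)%N.
Proof.
move=> huv h.
pose f : 'I_2 -> 'I_4 := fun i => if i == ord0 then u else v.
pose E : 'M[R]_(2, 4) := rowsub f 1%:M.
have -> : A = E^T *m (rowsub f A).
  apply/matrixP => i j; rewrite !mxE !big_ord_recl big_ord0 !mxE /f /=.
  have [<-|hu] := eqVneq u i.
    by rewrite eq_sym (negbTE huv) mul1r mul0r !addr0.
  have [<-|hv] := eqVneq v i.
    by rewrite mul1r mul0r add0r addr0.
  by rewrite !mul0r !addr0 h // eq_sym.
apply: leq_trans (mxrankM_maxr _ _) _.
exact: rank_leq_row.
Qed.

Lemma inMU (p : pt) : inM p -> inU p.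
Proof. by case=> h1 [h2 _]; split. Qed.

Definition p0 : pt := fun _ => 1.

Lemma one_lt_PI : Rlt 1 PI.
Proof. have := PI2_1; Lra.lra. Qed.

Lemma inM_p0 : inM p0.
Proof.
have /RltP h := one_lt_PI.
rewrite /inM /p0; split; first exact: ltr01.
split; apply/andP; split; rewrite ?IZR2E; try (by exact: ltr01); try exact: h.
apply: (lt_trans h); rewrite mulr_natl mulr2n ltrDr; exact: (lt_trans ltr01 h).
Qed.

Theorem proposition3p1 (alpha : R) (Ha : 0 < alpha) (Ha1 : alpha < 1) :
  (* (a) not Einstein *)
  (~ exists f : pt -> R, forall p : pt, inM p ->
       forall i j : 'I_4, Ric alpha p i j = f p * gmet alpha p i j)
  (* (a) not quasi-Einstein *)
  /\ (~ exists a : pt -> R, forall p : pt, inM p ->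
       \rank (Ricmat alpha p - a p *: gmat alpha p) = 1%N)
  (* (b) Einstein of degree 2 *)
  /\ (forall p : pt, inM p -> forall i j : 'I_4,
       Ric2 alpha p i j = (alpha ^+ 2 - 1) / (p ir ^+ 2) * Ric alpha p i j)
  (* (c) 2-quasi-Einstein, with a = 0 *)
  /\ (exists a : pt -> R, (forall p : pt, a p = 0) /\ forall p : pt, inM p ->
       \rank (Ricmat alpha p - a p *: gmat alpha p) = 2%N)
  (* (d) R = r^2 / (2 (alpha^2 - 1)) S /\ S *)
  /\ (forall p : pt, inM p -> forall h i j k : 'I_4,
       Riem alpha p h i j k
       = p ir ^+ 2 / (2 * (alpha ^+ 2 - 1)) * KN (Ric alpha p) (Ric alpha p) h i j k).
Proof.
have ha2 := a2_neq1 alpha Ha Ha1.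
have haN := lt0r_neq0 Ha.
have hp0 := inM_p0; have hU0 := inMU p0 hp0.
have hs1 : sin 1 != 0 by apply: sin_neq0; [Lra.lra | exact: one_lt_PI].
have Ent : forall (c : R) (p : pt), inM p -> forall i j,
    (Ricmat alpha p - c *: gmat alpha p) i j
    = ScN alpha (p ir) (p ith) (val i) (val j) - c * gmet alpha p i j.
  by move=> c p hp i j; rewrite !mxE RicE //; exact: inMU.
split.
  case=> f hf.
  have h0 := hf p0 hp0 it it; have h2 := hf p0 hp0 ith ith.
  rewrite RicE // /ScN /gmet /p0 /= ?IZRN1E in h0.
  rewrite RicE // /ScN /gmet /p0 /= ?IZRN1E in h2.
  have hf0 : f p0 = 0 by move: h0; rewrite mulrN1 => /eqP; rewrite eq_sym oppr_eq0 => /eqP.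
  by move: h2; rewrite hf0 mul0r => h2; move: ha2; rewrite h2 eqxx.
split.
  case=> c hc; have := hc p0 hp0.
  have [hc0|hc0] := eqVneq (c p0) 0.
    suff : (2 <= \rank (Ricmat alpha p0 - c p0 *: gmat alpha p0)%R)%N by move=> + h; rewrite h.
    apply: (@rank_ge2 _ ith iph) => //; rewrite Ent // hc0 mul0r subr0 /ScN /p0 //=.
    by rewrite mulf_neq0 // expf_neq0.
  suff : (2 <= \rank (Ricmat alpha p0 - c p0 *: gmat alpha p0)%R)%N by move=> + h; rewrite h.
  apply: (@rank_ge2 _ it ir) => //; rewrite Ent // /ScN /gmet /p0 /= ?IZRN1E.
  - by rewrite mulr0 subr0.
  - by rewrite mulr0 subr0.
  - by rewrite mulrN1 sub0r opprK.
  - by rewrite sub0r oppr_eq0 mulf_neq0 // div1r invr_neq0 // expf_neq0.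
split.
  by move=> p hp i j; apply: Ric2E => //; exact: inMU.
split.
  exists (fun _ => 0); split => // p hp.
  have [h1 [h2 h3]] := inU_facts p (inMU p hp).
  have hs := sin_neq0 _ h2 h3.
  apply/eqP; rewrite eqn_leq; apply/andP; split.
    apply: (@rank_le2 _ ith iph) => // i j hi1 hi2.
    rewrite Ent // mul0r subr0 /ScN.
    case: (ord4_cases i) => [->|[->|[Hi|Hi]]] /=; first 1 [by case: ifP | by case: ifP];
      by rewrite Hi eqxx in hi1 hi2.
  apply: (@rank_ge2 _ ith iph) => //; rewrite Ent // mul0r subr0 /ScN //=.
  by rewrite mulf_neq0 // expf_neq0.
move=> p hp h i j k.
by rewrite RiemE //; [rewrite /RcN /KN !RicE //; exact: inMU | exact: inMU].
Qed.
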